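(* Let $S$ be a group, $A$ a left $S$-act without zero subacts, $B$ any left $S$-act, and $I$ a set with $|I|\ge 1$. Then: (i) $B\amalg A^{(\ast)I}\amalg z_1$ and $B\amalg A\amalg z_1$ are geometrically equivalent; (ii) $B\amalg A^{(\ast)I}\amalg(z_1\amalg z_2)$ and $B\amalg A\amalg(z_1\amalg z_2)$ are geometrically equivalent.
   Context: A left $S$-act is a nonempty set with an action $S\times A\to A$ satisfying $1a=a$, $(st)a=s(ta)$; homomorphisms preserve the action; $\amalg$ denotes coproduct (disjoint union), and $A^{(\ast)I}=\coprod_{i\in I}A_i$ with each $A_i=A$. A zero $S$-act is a one-element $S$-act; $z_1,z_2$ denote zero $S$-acts. A zero subact of $A$ is a one-element subact. For a nonempty finite set $X$, $F_X=\coprod_{x\in X}S_x$ is the free $S$-act on $X$. For an $S$-act $G$ and a relation $T\subseteq F_X\times F_X$, $T'_G=\{\mu:F_X\to G \text{ homomorphism}: T\subseteq\ker\mu\}$ and $T''_G=\bigcap_{\mu\in T'_G}\ker\mu$ (empty intersection $=F_X\times F_X$). $S$-acts $G_1,G_2$ are geometrically equivalent iff $T''_{G_1}=T''_{G_2}$ for all nonempty finite $X$ and all $T\subseteq F_X\times F_X$. *)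

(* Defs.v *)
From mathcomp Require Import all_boot.
Set Implicit Arguments.
Unset Strict Implicit.
Unset Printing Implicit Defensive.

Record SGroup := {
  gcar :> Type;
  gmul : gcar -> gcar -> gcar;
  gone : gcar;
  ginv : gcar -> gcar;
  gmulA : forall x y z, gmul x (gmul y z) = gmul (gmul x y) z;
  gmul1l : forall x, gmul gone x = x;
  gmul1r : forall x, gmul x gone = x;
  gmulVl : forall x, gmul (ginv x) x = gone;
  gmulVr : forall x, gmul x (ginv x) = gone
}.

(* Left S-acts (carrier + action satisfying 1a = a, (st)a = s(ta)).
   Nonemptiness is imposed separately where needed. *)
Record Act (S : SGroup) := {
  acar :> Type;
  act : gcar S -> acar -> acar;
  act1 : forall a, act (gone S) a = a;
  actA : forall s t a, act (gmul s t) a = act s (act t a)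
}.

Section Acts.
Variable S : SGroup.

Definition is_hom (A B : Act S) (f : A -> B) : Prop :=
  forall (s : S) (a : A), f (act s a) = act s (f a).

(* A has no zero subact: no one-element subact {a}, i.e. no a with s a = a for all s. *)
Definition no_zero_subact (A : Act S) : Prop :=
  ~ exists a : A, forall s : S, act s a = a.

Definition coprod_fun (A B : Act S) (s : S) (x : A + B) : A + B :=
  match x with inl a => inl (act s a) | inr b => inr (act s b) end.

Lemma coprod_act1 (A B : Act S) x : @coprod_fun A B (gone S) x = x.
Proof. by case: x => [a|b] /=; rewrite act1. Qed.

Lemma coprod_actA (A B : Act S) s t x :
  @coprod_fun A B (gmul s t) x = @coprod_fun A B s (@coprod_fun A B t x).
Proof. by case: x => [a|b] /=; rewrite actA. Qed.

Definition coprod (A B : Act S) : Act S :=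
  {| acar := (A + B)%type; act := @coprod_fun A B;
     act1 := @coprod_act1 A B; actA := @coprod_actA A B |}.

(* A^{( * )I} = coproduct of I copies of A, carrier I x A *)
Definition copow_fun (I : Type) (A : Act S) (s : S) (x : I * A) : I * A :=
  (x.1, act s x.2).

Lemma copow_act1 (I : Type) (A : Act S) x : @copow_fun I A (gone S) x = x.
Proof. by case: x => i a; rewrite /copow_fun /= act1. Qed.

Lemma copow_actA (I : Type) (A : Act S) s t x :
  @copow_fun I A (gmul s t) x = @copow_fun I A s (@copow_fun I A t x).
Proof. by case: x => i a; rewrite /copow_fun /= actA. Qed.

Definition copow (I : Type) (A : Act S) : Act S :=
  {| acar := (I * A)%type; act := @copow_fun I A;
     act1 := @copow_act1 I A; actA := @copow_actA I A |}.

Definition zero_act : Act S :=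
  {| acar := unit; act := fun _ x => x;
     act1 := fun _ => erefl; actA := fun _ _ _ => erefl |}.

(* free S-act F_X = coprod_{x in X} S_x, carrier X x S, s (x,t) = (x, s t) *)
Definition free_fun (X : Type) (s : S) (p : X * S) : X * S :=
  (p.1, gmul s p.2).

Lemma free_act1 (X : Type) p : @free_fun X (gone S) p = p.
Proof. by case: p => x t; rewrite /free_fun /= gmul1l. Qed.

Lemma free_actA (X : Type) s t p :
  @free_fun X (gmul s t) p = @free_fun X s (@free_fun X t p).
Proof. by case: p => x u; rewrite /free_fun /= gmulA. Qed.

Definition free_act (X : Type) : Act S :=
  {| acar := (X * S)%type; act := @free_fun X;
     act1 := @free_act1 X; actA := @free_actA X |}.

(* T''_G : the intersection of ker mu over homomorphisms mu : F_X -> G with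
   T contained in ker mu (empty intersection = F_X x F_X). *)
Definition closure_G (G : Act S) (X : Type)
    (T : free_act X -> free_act X -> Prop) : free_act X -> free_act X -> Prop :=
  fun p q => forall mu : free_act X -> G, is_hom mu ->
    (forall u v, T u v -> mu u = mu v) -> mu p = mu q.

Definition geom_equiv (G1 G2 : Act S) : Prop :=
  forall (X : finType), 0 < #|X| ->
  forall (T : free_act X -> free_act X -> Prop) (p q : free_act X),
    closure_G G1 T p q <-> closure_G G2 T p q.

End Acts.

(* Main.v *)
Require Import Defs.
From mathcomp Require Import all_boot.
From Stdlib Require Import ClassicalEpsilon.

Section Key.
Variables (S : SGroup) (A B Z : Act S) (I : Type) (i0 : I) (z0 : Z).
Hypothesis hz : forall s : S, act s z0 = z0.

Definition G1 := coprod (coprod B (copow I A)) Z.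
Definition G2 := coprod (coprod B A) Z.

Definition hh (i : I) (x : G1) : G2 :=
  match x with
  | inl (inl b) => inl (inl b)
  | inl (inr p) => if excluded_middle_informative (p.1 = i)
                   then inl (inr p.2) else inr z0
  | inr z => inr z
  end.

Lemma hh_hom i : is_hom (hh i).
Proof.
move=> s [[b|[j a]]|z] //=.
by case: excluded_middle_informative => //= _; rewrite hz.
Qed.

Definition jj (x : G2) : G1 :=
  match x with
  | inl (inl b) => inl (inl b)
  | inl (inr a) => inl (inr (i0, a))
  | inr z => inr z
  end.

Lemma jj_hom : is_hom jj.
Proof. by move=> s [[b|a]|z]. Qed.

Lemma jj_inj u v : jj u = jj v -> u = v.
Proof. by case: u => [[b|a]|z]; case: v => [[b'|a']|z'] //= [] ->. Qed.

Lemma hh_sep (u v : G1) : (forall i, hh i u = hh i v) -> u = v.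
Proof.
case: u => [[b|[j a]]|z] Hi.
- have := Hi i0; case: v {Hi} => [[b'|[j' a']]|z'] //=.
  + by case=> ->.
  + by case: excluded_middle_informative.
- have := Hi j; rewrite /= ; case: excluded_middle_informative => // e0.
  case: v {Hi} => [[b'|[j' a']]|z'] //=;
    case: excluded_middle_informative => //= ej' [] ->; by rewrite -ej'.
- have := Hi i0; move: Hi; case: v =>  [[b'|[j' a']]|z'] //= Hi.
  + move=> _; have := Hi j' => /=.
    by case: excluded_middle_informative.
  + by case=> ->.
Qed.

Lemma key : geom_equiv G1 G2.
Proof.
move=> X _ T p q; split.
- move=> H mu hmu hT.
  apply: jj_inj; apply: (H (fun x => jj (mu x))).
  + by move=> s a /=; rewrite hmu jj_hom.
  + by move=> u v /hT ->.
- move=> H mu hmu hT.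
  apply: hh_sep => i; apply: (H (fun x => hh i (mu x))).
  + by move=> s a /=; rewrite hmu hh_hom.
  + by move=> u v /hT ->.
Qed.
End Key.

Theorem proposition3p15 (S : SGroup) (A B : Act S) (I : Type) :
  inhabited A -> inhabited B -> no_zero_subact A -> inhabited I ->
  geom_equiv (coprod (coprod B (copow I A)) (zero_act S))
             (coprod (coprod B A) (zero_act S)) /\
  geom_equiv (coprod (coprod B (copow I A)) (coprod (zero_act S) (zero_act S)))
             (coprod (coprod B A) (coprod (zero_act S) (zero_act S))).
Proof.
move=> _ _ _ [i0]; split.
- exact: (@key S A B (zero_act S) I i0 tt).
- exact: (@key S A B (coprod (zero_act S) (zero_act S)) I i0 (inl tt)).
Qed.
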